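(* Let $C_i, C_j, C_k$ be three pairwise disjoint closed circular discs in $\mathbb{R}^2$ with non-collinear centers (in non-degenerate position). Then the feasible region $S_{i,j}\cap S_{j,k}\cap S_{i,k}$ is a convex polygon with at least $4$ and at most $6$ vertices; in particular it is never a triangle.
   Context: For two disjoint closed discs $C_a, C_b$ with centers $c_a,c_b$, let $p_a, p_b$ be the points where the segment $\overline{c_ac_b}$ meets the boundary circles of $C_a$ and $C_b$ respectively, and let $l_a, l_b$ be the lines through $p_a$, $p_b$ perpendicular to $\overline{c_ac_b}$. The slab $S_{a,b}$ is the closed region between the parallel lines $l_a$ and $l_b$. For three pairwise disjoint discs $C_i,C_j,C_k$, the feasible region is $S_{i,j}\cap S_{j,k}\cap S_{i,k}$. *)

(* Defs.v *)
From HB Require Import structures.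
From mathcomp Require Import all_boot all_order all_algebra.
From mathcomp Require Import reals.
Set Implicit Arguments. Unset Strict Implicit. Unset Printing Implicit Defensive.
Import Order.TTheory GRing.Theory Num.Theory.
Local Open Scope ring_scope.

Section Plane.
Variable R : realType.

Definition pt := (R * R)%type.

Definition padd (x y : pt) : pt := (x.1 + y.1, x.2 + y.2).
Definition psub (x y : pt) : pt := (x.1 - y.1, x.2 - y.2).
Definition pscale (t : R) (x : pt) : pt := (t * x.1, t * x.2).
Definition dot (x y : pt) : R := x.1 * y.1 + x.2 * y.2.
Definition pnorm (x : pt) : R := Num.sqrt (dot x x).
Definition cross (x y : pt) : R := x.1 * y.2 - x.2 * y.1.

Definition disc (c : pt) (r : R) : pt -> Prop :=
  fun x => pnorm (psub x c) <= r.

(* The point where the segment [c_a, c_b] meets the boundary circle of the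
   disc (c_a, r_a). *)
Definition boundary_pt (ca : pt) (ra : R) (cb : pt) : pt :=
  padd ca (pscale (ra / pnorm (psub cb ca)) (psub cb ca)).

(* Line through p perpendicular to direction u: { x | <x - p, u> = 0 }.
   The closed region between the two parallel lines l_a, l_b (both
   perpendicular to u = c_b - c_a) is the set of points whose signed
   positions relative to the two lines have opposite signs (or vanish). *)
Definition slab (ca : pt) (ra : R) (cb : pt) (rb : R) : pt -> Prop :=
  let u := psub cb ca in
  let pa := boundary_pt ca ra cb in
  let pb := boundary_pt cb rb ca in
  fun x => dot (psub x pa) u * dot (psub x pb) u <= 0.

Definition extreme_point (S : pt -> Prop) (x : pt) : Prop :=
  S x /\ forall y z (t : R), S y -> S z -> 0 < t < 1 ->
    x = padd (pscale (1 - t) y) (pscale t z) -> y = x /\ z = x.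

Definition conv_hull (V : seq pt) : pt -> Prop :=
  fun x => exists w : 'I_(size V) -> R,
    (forall i, 0 <= w i) /\ \sum_(i < size V) w i = 1 /\
    x = (\sum_(i < size V) w i * (nth x V i).1,
         \sum_(i < size V) w i * (nth x V i).2).

Definition convex_polygon_with (S : pt -> Prop) (n : nat) : Prop :=
  exists V : seq pt, uniq V /\ size V = n /\
    (forall x, S x <-> conv_hull V x) /\
    (forall x, extreme_point S x <-> x \in V).

End Plane.

(* Main.v *)
Require Import Defs.
From HB Require Import structures.
From mathcomp Require Import all_boot all_order all_algebra.
From mathcomp Require Import reals.
From mathcomp Require Import ring lra.
Import Order.TTheory GRing.Theory Num.Theory.
Local Open Scope ring_scope.


Module PA.


Section Hull.
Variable R : realType.
Implicit Types (V : seq (pt R)) (x y z : pt R).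

Definition hullw V x (w : 'I_(size V) -> R) :=
  (forall i, 0 <= w i) /\ \sum_(i < size V) w i = 1 /\
    x = (\sum_(i < size V) w i * (nth (0,0) V i).1,
         \sum_(i < size V) w i * (nth (0,0) V i).2).

Lemma conv_hullP V x : conv_hull V x <-> exists w, hullw V x w.
Proof.
have E : forall (d : pt R) (w : 'I_(size V) -> R) (f : pt R -> R),
  \sum_(i < size V) w i * f (nth d V i) = \sum_(i < size V) w i * f (nth (0,0) V i).
  by move=> d w f; apply: eq_bigr => i _; rewrite (set_nth_default (0,0)).
split=> -[w [h1 [h2 h3]]]; exists w; split=> //; split=> //.
  by rewrite -(E x w fst) -(E x w snd).
by rewrite (E x w fst) (E x w snd).
Qed.

Lemma hull_lin V x (a b c : R) :
  (forall v, v \in V -> a * v.1 + b * v.2 <= c) -> conv_hull V x -> a * x.1 + b * x.2 <= c.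
Proof.
move=> H /conv_hullP [w [w0 [w1 ->]]] /=.
rewrite !mulr_sumr -big_split /=.
rewrite -[c]mul1r -w1 mulr_suml; apply: ler_sum => i _.
have := H _ (mem_nth (0,0) (ltn_ord i)).
move: (w0 i) => wi hi.
have -> : a * (w i * (nth (0,0) V i).1) + b * (w i * (nth (0,0) V i).2)
   = w i * (a * (nth (0,0) V i).1 + b * (nth (0,0) V i).2) by ring.
by rewrite ler_wpM2l.
Qed.

Lemma hull_mem V v : v \in V -> conv_hull V v.
Proof.
move=> vV; apply/conv_hullP.
pose j : 'I_(size V) := Ordinal (eq_ind_r is_true vV (index_mem v V)).
have nj : nth (0,0) V j = v by rewrite nth_index.
exists (fun i => if i == j then 1 else 0); split.
  by move=> i; case: ifP.
split.
  by rewrite (bigD1 j) //= eqxx big1 ?addr0 // => i /negbTE ->.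
rewrite (bigD1 j) //= eqxx (bigD1 j (P := predT)) //= eqxx.
rewrite !big1 ?addr0 ?mul1r ?nj; first by case: v {vV nj j}.
  by move=> i /negbTE ->; rewrite mul0r.
by move=> i /negbTE ->; rewrite mul0r.
Qed.

Lemma hull_convex V y z (t : R) : conv_hull V y -> conv_hull V z -> 0 <= t <= 1 ->
  conv_hull V (padd (pscale (1 - t) y) (pscale t z)).
Proof.
move=> /conv_hullP [wy [y0 [y1 ye]]] /conv_hullP [wz [z0 [z1 ze]]] /andP [t0 t1].
apply/conv_hullP; exists (fun i => (1 - t) * wy i + t * wz i); split.
  move=> i; apply: addr_ge0; apply: mulr_ge0 => //; lra.
split.
  by rewrite big_split /= -!mulr_sumr y1 z1; ring.
rewrite ye ze /padd /pscale /=; congr (_, _);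
  rewrite !mulr_sumr -big_split /=; apply: eq_bigr => i _; ring.
Qed.

End Hull.

Lemma seg2 (R : realType) (V : seq (pt R)) (a b x : pt R) (num den : R) :
  conv_hull V a -> conv_hull V b -> 0 <= num -> num <= den -> 0 < den ->
  (x.1 - a.1) * den = num * (b.1 - a.1) -> (x.2 - a.2) * den = num * (b.2 - a.2) ->
  conv_hull V x.
Proof.
move=> ha hb n0 nd d0 e1 e2.
have t01 : 0 <= num / den <= 1.
  by apply/andP; split; [apply: divr_ge0; lra|rewrite ler_pdivrMr // mul1r].
have := @hull_convex R V a b _ ha hb t01.
have -> : padd (pscale (1 - num / den) a) (pscale (num / den) b) = x; last done.
have dn : den != 0 by apply: lt0r_neq0.
rewrite /padd /pscale [x]surjective_pairing /=; congr (_, _).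
  have -> : x.1 = a.1 + num * (b.1 - a.1) / den by rewrite -e1 mulfK //; ring.
  by field.
have -> : x.2 = a.2 + num * (b.2 - a.2) / den by rewrite -e2 mulfK //; ring.
by field.
Qed.
Arguments hull_mem {R V v}.
Arguments seg2 {R V a b x}.
Arguments hull_lin {R V x}.

End PA.
Import PA.

Module PB.

Section Ext.
Variable R : realType.

Lemma hull_ext (S : pt R -> Prop) (V : seq (pt R)) (x : pt R) :
  (forall y, conv_hull V y -> S y) -> extreme_point S x -> conv_hull V x -> x \in V.
Proof.
move=> HS [Sx Ex] /conv_hullP [w [w0 [w1 xe]]].
case: (pickP (fun j => 0 < w j)) => [j wj|]; last first.
  move=> H; exfalso.
  have : \sum_(i < size V) w i <= \sum_(i < size V) (0:R).
    by apply: ler_sum => i _; move: (H i) => /= /negbT; rewrite -leNgt.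
  rewrite big1_eq.
  by rewrite w1; lra.
set v := nth (0,0) V j.
have vV : v \in V by apply: mem_nth.
have Sv : S v by apply: HS; apply: hull_mem.
have rest0 : forall i, 0 <= w i := w0.
have Hs : w j + \sum_(i < size V | i != j) w i = 1 by rewrite -w1 [in RHS](bigD1 j).
have rge : 0 <= \sum_(i < size V | i != j) w i by apply: sumr_ge0.
have xe1 : x.1 = w j * v.1 + \sum_(i < size V | i != j) w i * (nth (0,0) V i).1
  by rewrite xe /= (bigD1 j).
have xe2 : x.2 = w j * v.2 + \sum_(i < size V | i != j) w i * (nth (0,0) V i).2
  by rewrite xe /= (bigD1 j).
case: (ltrP (w j) 1) => hj; last first.
  have r0 : \sum_(i < size V | i != j) w i = 0 by lra.
  have wi0 : forall i, i != j -> w i = 0.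
    by move=> i ij; move/psumr_eq0P: r0 => /(_ (fun i _ => w0 i)) /(_ i ij).
  have s1 : w j = 1 by lra.
  have -> : x = v.
    rewrite [x]surjective_pairing [v]surjective_pairing xe1 xe2 s1 !mul1r.
    by rewrite !big1 ?addr0 // => i ij; rewrite wi0 // mul0r.
  done.
pose w' := fun i : 'I_(size V) => if i == j then 0 else w i / (1 - w j).
pose y : pt R := (\sum_(i < size V) w' i * (nth (0,0) V i).1,
                  \sum_(i < size V) w' i * (nth (0,0) V i).2).
have pos : 0 < 1 - w j by lra.
have sw : forall f : pt R -> R, \sum_(i < size V) w' i * f (nth (0,0) V i)
       = (\sum_(i < size V | i != j) w i * f (nth (0,0) V i)) / (1 - w j).
  move=> f; rewrite (bigD1 j) //= /w' eqxx mul0r add0r mulr_suml.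
  by apply: eq_bigr => i /negbTE ->; rewrite mulrAC.
have Sy : S y.
  apply: HS; apply/conv_hullP; exists w'; split.
    by move=> i; rewrite /w'; case: ifP => _ //; apply: divr_ge0 => //; lra.
  split=> //.
  rewrite (bigD1 j) //= /w' eqxx add0r.
  have -> : \sum_(i < size V | i != j) (if i == j then 0 else w i / (1 - w j)) = (\sum_(i < size V | i != j) w i) / (1 - w j).
    by rewrite mulr_suml; apply: eq_bigr => i /negbTE ->.
  have -> : \sum_(i < size V | i != j) w i = 1 - w j by lra.
  by rewrite divff //; apply: lt0r_neq0.
have := Ex v y (1 - w j) Sv Sy.
have t01 : 0 < 1 - w j < 1 by apply/andP; split; lra.
move=> /(_ t01) [].
  rewrite /padd /pscale [x]surjective_pairing /y (sw fst) (sw snd) xe1 xe2.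
  have nz : 1 - w j != 0 by apply: lt0r_neq0.
  rewrite ![(1 - w j) * (_ / _)]mulrC !divfK //.
  by congr (_, _); congr (_ + _); congr (_ * _); ring.
by move=> <-.
Qed.

End Ext.

End PB.
Import PB.

Module PC.

Ltac split_ifs := repeat match goal with
 | |- context [if ?a <= ?b then _ else _] => let h := fresh "hif" in case: (lerP a b) => h /=
 | H : context [if ?a <= ?b then _ else _] |- _ => let h := fresh "hif" in case: (lerP a b) H => h H /=
 end.

Section Poly.
Variable R : realType.
Variables w1 w2 L U : R.
Definition good := 0 < w1 /\ 0 < w2 /\ L < U /\ L < w1 + w2 /\ 0 < U.

Definition T (x : pt R) : Prop :=
  0 <= x.1 /\ x.1 <= w1 /\ 0 <= x.2 /\ x.2 <= w2 /\ L <= x.1 + x.2 /\ x.1 + x.2 <= U.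

Definition p0 : R := if L - w2 <= 0 then 0 else L - w2.
Definition p1 : R := if w1 <= U then w1 else U.
Definition f (P : R) : R := if L - P <= 0 then 0 else L - P.
Definition g (P : R) : R := if w2 <= U - P then w2 else U - P.

Lemma p01 : good -> p0 < p1.
Proof. move=> [?[?[?[??]]]]. rewrite /p0 /p1; split_ifs; lra. Qed.

Lemma fg P : good -> p0 <= P <= p1 -> f P <= g P.
Proof. move=> [?[?[?[??]]]]. rewrite /p0 /p1 /f /g => /andP [h1 h2]; move: h1 h2; split_ifs; lra. Qed.

Lemma TP x : good -> T x <-> (p0 <= x.1 /\ x.1 <= p1 /\ f x.1 <= x.2 /\ x.2 <= g x.1).
Proof.
move=> [?[?[?[??]]]]; rewrite /T /p0 /p1 /f /g; split.
  by move=> [?[?[?[?[??]]]]]; split_ifs; lra.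
by move=> [h1 [h2 [h3 h4]]]; move: h1 h2 h3 h4; split_ifs; lra.
Qed.

End Poly.

End PC.
Import PC.

Module PD.

Lemma conv0 (R : realType) (t a b : R) : 0 < t < 1 -> 0 <= a -> 0 <= b -> (1 - t) * a + t * b = 0 -> a = 0 /\ b = 0.
Proof. move=> /andP [t0 t1] a0 b0 h; split; nra. Qed.
Arguments conv0 {R t a b}.

Lemma pt_eq (R : realType) (x : pt R) a b : x.1 = a -> x.2 = b -> x = (a, b).
Proof. by case: x => /= ?? -> ->. Qed.

Arguments p01 {R w1 w2 L U}.
Arguments fg {R w1 w2 L U} P.
Arguments TP {R w1 w2 L U} x.

Section Cands.
Variable R : realType.
Variables w1 w2 L U : R.

Notation T := (T R w1 w2 L U).
Notation p0 := (p0 R w2 L).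
Notation p1 := (p1 R w1 U).
Notation f := (f R L).
Notation g := (g R w2 U).
Notation good := (good R w1 w2 L U).

Lemma ext2 (v : pt R) (a1 b1 c1 a2 b2 c2 : R) :
  T v -> a1 * b2 - a2 * b1 != 0 ->
  a1 * v.1 + b1 * v.2 = c1 -> a2 * v.1 + b2 * v.2 = c2 ->
  (forall y, T y -> c1 <= a1 * y.1 + b1 * y.2) ->
  (forall y, T y -> a1 * y.1 + b1 * y.2 = c1 -> c2 <= a2 * y.1 + b2 * y.2) ->
  extreme_point T v.
Proof.
move=> Tv det h1 h2 H1 H2; split=> // y z t Ty Tz t01 ve.
have e1 : v.1 = (1 - t) * y.1 + t * z.1 by rewrite ve.
have e2 : v.2 = (1 - t) * y.2 + t * z.2 by rewrite ve.
have [u1 u2] : a1 * y.1 + b1 * y.2 - c1 = 0 /\ a1 * z.1 + b1 * z.2 - c1 = 0.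
  apply: (conv0 t01); rewrite ?subr_ge0; [exact: H1|exact: H1|].
  rewrite -h1 e1 e2; ring.
have [u3 u4] : a2 * y.1 + b2 * y.2 - c2 = 0 /\ a2 * z.1 + b2 * z.2 - c2 = 0.
  apply: (conv0 t01); rewrite ?subr_ge0; [apply: H2 => //; lra|apply: H2 => //; lra|].
  rewrite -h2 e1 e2; ring.
have sol : forall w : pt R, a1 * w.1 + b1 * w.2 = c1 -> a2 * w.1 + b2 * w.2 = c2 -> w = v.
  move=> w hw1 hw2; rewrite [w]surjective_pairing [v]surjective_pairing.
  have hd : (a1 * b2 - a2 * b1) * (w.1 - v.1) = b2 * ((a1 * w.1 + b1 * w.2) - (a1 * v.1 + b1 * v.2)) - b1 * ((a2 * w.1 + b2 * w.2) - (a2 * v.1 + b2 * v.2)) by ring.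
  have he : (a1 * b2 - a2 * b1) * (w.2 - v.2) = a1 * ((a2 * w.1 + b2 * w.2) - (a2 * v.1 + b2 * v.2)) - a2 * ((a1 * w.1 + b1 * w.2) - (a1 * v.1 + b1 * v.2)) by ring.
  rewrite hw1 hw2 h1 h2 !subrr !mulr0 subrr in hd he.
  move/eqP: hd; rewrite mulf_eq0 (negbTE det) /= subr_eq0 => /eqP ->.
  by move/eqP: he; rewrite mulf_eq0 (negbTE det) /= subr_eq0 => /eqP ->.
split; apply: sol; lra.
Qed.


Definition cA : pt R := (p0, f p0).
Definition cB : pt R := (p0, g p0).
Definition cC : pt R := (p1, f p1).
Definition cD : pt R := (p1, g p1).
Definition cE : pt R := (L, 0).
Definition cF : pt R := (U - w2, w2).
Definition bE := (p0 < L) && (L < p1).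
Definition bF := (p0 < U - w2) && (U - w2 < p1).
Definition cands : seq (pt R) :=
  [:: cA; cB; cC; cD] ++ (if bE then [:: cE] else [::]) ++ (if bF then [:: cF] else [::]).

Lemma TA : good -> T cA.
Proof. move=> G; apply/(TP _ G) => /=; have := p01 G; have := fg p0 G; move=> h1 h2.
split; first lra. split; first lra. split; first lra. apply: h1; apply/andP; lra. Qed.


Lemma Tgen a b : good -> p0 <= a <= p1 -> b = f a \/ b = g a -> T (a, b).
Proof.
move=> G ha hb; apply/(TP _ G) => /=; have := fg a G ha; move: ha => /andP [? ?] ?.
by case: hb => ->; lra.
Qed.
Lemma TB : good -> T cB. Proof. move=> G; have := p01 G => ?; apply: Tgen => //; [apply/andP; lra|auto]. Qed.
Lemma TC : good -> T cC. Proof. move=> G; have := p01 G => ?; apply: Tgen => //; [apply/andP; lra|auto]. Qed.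
Lemma TD : good -> T cD. Proof. move=> G; have := p01 G => ?; apply: Tgen => //; [apply/andP; lra|auto]. Qed.
Lemma TE : good -> bE -> T cE.
Proof. move=> [?[?[?[??]]]] /andP []; rewrite /T /= /PC.p0 /PC.p1; split_ifs; lra. Qed.
Lemma TF : good -> bF -> T cF.
Proof. move=> [?[?[?[??]]]] /andP []; rewrite /T /= /PC.p0 /PC.p1; split_ifs; lra. Qed.

Lemma inP_cons (P : pt R -> Prop) a s : P a -> (forall x, x \in s -> P x) -> forall x, x \in a :: s -> P x.
Proof. by move=> Pa Ps x; rewrite inE => /orP [/eqP -> //|]; apply: Ps. Qed.
Lemma inP_nil (P : pt R -> Prop) : forall x, x \in [::] -> P x.
Proof. by []. Qed.
Lemma inP_cat (P : pt R -> Prop) s1 s2 : (forall x, x \in s1 -> P x) -> (forall x, x \in s2 -> P x) -> forall x, x \in s1 ++ s2 -> P x.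
Proof. by move=> h1 h2 x; rewrite mem_cat => /orP [/h1|/h2]. Qed.

Lemma cands_P (P : pt R -> Prop) : P cA -> P cB -> P cC -> P cD -> (bE -> P cE) -> (bF -> P cF) ->
  forall v, v \in cands -> P v.
Proof.
move=> hA hB hC hD hE hF; rewrite /cands.
apply: inP_cat; first by do 4! apply: inP_cons => //; apply: inP_nil.
apply: inP_cat; [case: bE hE => hE; [apply: inP_cons => //; exact: hE|]|case: bF hF => hF; [apply: inP_cons => //; exact: hF|]]; apply: inP_nil.
Qed.

Lemma cands_T v : good -> v \in cands -> T v.
Proof. move=> G; apply: cands_P; [exact: TA|exact: TB|exact: TC|exact: TD|exact: TE|exact: TF]. Qed.

Lemma cands_ext v : good -> v \in cands -> extreme_point T v.
Proof.
move=> G; apply: cands_P.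
- apply: (ext2 _ (1) (0) (p0) (0) (1) (f p0)); first exact: TA.
  + by apply/negP => /eqP; lra.
  + by rewrite /= mul1r mul0r addr0.
  + by rewrite /= mul1r mul0r add0r.
  + by move=> y /(TP _ G) [? _]; lra.
  + move=> y /(TP _ G) [_ [_ [? _]]] hy. have e : p0 = y.1 by lra. rewrite e. lra.
- apply: (ext2 _ (1) (0) (p0) (0) (-1) (- g p0)); first exact: TB.
  + by apply/negP => /eqP; lra.
  + by rewrite /= mul1r mul0r addr0.
  + by rewrite /= mulN1r mul0r add0r.
  + by move=> y /(TP _ G) [? _]; lra.
  + move=> y /(TP _ G) [_ [_ [_ ?]]] hy; have e : p0 = y.1 by lra. rewrite e; lra.
- apply: (ext2 _ (-1) (0) (-p1) (0) (1) (f p1)); first exact: TC.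
  + by apply/negP => /eqP; lra.
  + by rewrite /= mulN1r mul0r addr0.
  + by rewrite /= mul1r mul0r add0r.
  + by move=> y /(TP _ G) [_ [? _]]; lra.
  + move=> y /(TP _ G) [_ [_ [? _]]] hy; have e : p1 = y.1 by lra. rewrite e; lra.
- apply: (ext2 _ (-1) (0) (-p1) (0) (-1) (- g p1)); first exact: TD.
  + by apply/negP => /eqP; lra.
  + by rewrite /= mulN1r mul0r addr0.
  + by rewrite /= mulN1r mul0r add0r.
  + by move=> y /(TP _ G) [_ [? _]]; lra.
  + move=> y /(TP _ G) [_ [_ [_ ?]]] hy; have e : p1 = y.1 by lra. rewrite e; lra.
- move=> hE; apply: (ext2 _ (0) (1) (0) (1) (1) (L)); first exact: TE.
  + by apply/negP => /eqP; lra.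
  + by rewrite /= mul1r mul0r add0r.
  + by rewrite /= !mul1r addr0.
  + by move=> y [_ [_ [? _]]]; lra.
  + by move=> y [_ [_ [_ [_ [? _]]]]] _; lra.
- move=> hF; apply: (ext2 _ (0) (-1) (-w2) (-1) (-1) (-U)); first exact: TF.
  + by apply/negP => /eqP; lra.
  + by rewrite /= mulN1r mul0r add0r.
  + by rewrite /= !mulN1r; ring.
  + by move=> y [_ [_ [_ [? _]]]]; lra.
  + by move=> y [_ [_ [_ [_ [_ ?]]]]] _; lra.
Qed.

Definition Vc := undup cands.

Lemma inV_A : cA \in Vc. Proof. by rewrite mem_undup /cands !mem_cat !inE eqxx. Qed.
Lemma inV_B : cB \in Vc. Proof. by rewrite mem_undup /cands !mem_cat !inE eqxx !orbT. Qed.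
Lemma inV_C : cC \in Vc. Proof. by rewrite mem_undup /cands !mem_cat !inE eqxx !orbT. Qed.
Lemma inV_D : cD \in Vc. Proof. by rewrite mem_undup /cands !mem_cat !inE eqxx !orbT. Qed.
Lemma inV_E : bE -> cE \in Vc. Proof. by move=> h; rewrite mem_undup /cands !mem_cat h !inE eqxx !orbT. Qed.
Lemma inV_F : bF -> cF \in Vc. Proof. by move=> h; rewrite mem_undup /cands !mem_cat h !inE eqxx !orbT. Qed.

Ltac unf := rewrite /cA /cB /cC /cD /cE /cF /PC.f /PC.g /PC.p0 /PC.p1 /=.

Lemma lo_hull P : good -> p0 <= P <= p1 -> conv_hull Vc (P, f P).
Proof.
move=> G /andP [h0 h1]; have := p01 G => h01.
case hE: bE.
  move: (hE) => /andP [e0 e1].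
  case: (lerP P L) => hP.
    apply: (seg2 (P - p0) (L - p0) (hull_mem (inV_A)) (hull_mem (inV_E hE))); try lra.
      by rewrite /=; ring.
    move: e0 e1 hP h0 h1 h01; unf; split_ifs; try lra; move=> *; nra.
  apply: (seg2 (P - L) (p1 - L) (hull_mem (inV_E hE)) (hull_mem (inV_C))); try lra.
    by rewrite /=; ring.
  move: e0 e1 hP h0 h1 h01; unf; split_ifs; try lra; move=> *; nra.
move: hE => /negbT /nandP hE.
apply: (seg2 (P - p0) (p1 - p0) (hull_mem (inV_A)) (hull_mem (inV_C))); try lra.
  by rewrite /=; ring.
move: hE h0 h1 h01; rewrite -!leNgt; unf; split_ifs; try lra; move=> *; nra.
Qed.

Lemma hi_hull P : good -> p0 <= P <= p1 -> conv_hull Vc (P, g P).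
Proof.
move=> G /andP [h0 h1]; have := p01 G => h01.
case hF: bF.
  move: (hF) => /andP [e0 e1].
  case: (lerP P (U - w2)) => hP.
    apply: (seg2 (P - p0) (U - w2 - p0) (hull_mem (inV_B)) (hull_mem (inV_F hF))); try lra.
      by rewrite /=; ring.
    move: e0 e1 hP h0 h1 h01; unf; split_ifs; try lra; move=> *; nra.
  apply: (seg2 (P - (U - w2)) (p1 - (U - w2)) (hull_mem (inV_F hF)) (hull_mem (inV_D))); try lra.
    by rewrite /=; ring.
  move: e0 e1 hP h0 h1 h01; unf; split_ifs; try lra; move=> *; nra.
move: hF => /negbT /nandP hF.
apply: (seg2 (P - p0) (p1 - p0) (hull_mem (inV_B)) (hull_mem (inV_D))); try lra.
  by rewrite /=; ring.
move: hF h0 h1 h01; rewrite -!leNgt; unf; split_ifs; try lra; move=> *; nra.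
Qed.

Lemma T_hull x : good -> T x -> conv_hull Vc x.
Proof.
move=> G /(TP _ G) [h0 [h1 [h2 h3]]].
have hP : p0 <= x.1 <= p1 by apply/andP.
have lo := lo_hull _ G hP; have hi := hi_hull _ G hP.
case: (ltrP (f x.1) (g x.1)) => hfg.
  apply: (seg2 (x.2 - f x.1) (g x.1 - f x.1) lo hi); rewrite /=; try lra; ring.
have -> : x = (x.1, f x.1) by apply: pt_eq => //; lra.
exact: lo.
Qed.

Lemma hull_T x : good -> conv_hull Vc x -> T x.
Proof.
move=> G hx.
have HV : forall v, v \in Vc -> T v by move=> v; rewrite mem_undup; apply: cands_T.
have l1 := hull_lin (-1) 0 0 (fun v hv => let: conj a _ := HV v hv in ltac:(lra)) hx.
have l2 := hull_lin 1 0 w1 (fun v hv => let: conj _ (conj a _) := HV v hv in ltac:(lra)) hx.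
have l3 := hull_lin 0 (-1) 0 (fun v hv => let: conj _ (conj _ (conj a _)) := HV v hv in ltac:(lra)) hx.
have l4 := hull_lin 0 1 w2 (fun v hv => let: conj _ (conj _ (conj _ (conj a _))) := HV v hv in ltac:(lra)) hx.
have l5 := hull_lin (-1) (-1) (-L) (fun v hv => let: conj _ (conj _ (conj _ (conj _ (conj a _)))) := HV v hv in ltac:(lra)) hx.
have l6 := hull_lin 1 1 U (fun v hv => let: conj _ (conj _ (conj _ (conj _ (conj _ a)))) := HV v hv in ltac:(lra)) hx.
rewrite /T; lra.
Qed.

End Cands.

End PD.
Import PD.

Module PE.

Ltac brute := solve [lra | match goal with
 | H : _ \/ _ |- _ => case: H => H; brute
 | H : context [if ?a <= ?b then _ else _] |- _ => let h := fresh "hif" in case: (lerP a b) H => h H /=; brute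
 end].

Section Count.
Variable R : realType.
Variables w1 w2 L U : R.
Notation T := (T R w1 w2 L U).
Notation p0 := (p0 R w2 L).
Notation p1 := (p1 R w1 U).
Notation f := (f R L).
Notation g := (g R w2 U).
Notation good := (good R w1 w2 L U).
Notation Vc := (Vc R w1 w2 L U).
Notation cA := (cA R w2 L).
Notation cB := (cB R w2 L U).
Notation cC := (cC R w1 L U).
Notation cD := (cD R w1 w2 U).
Notation cE := (cE R L).
Notation cF := (cF R w2 U).
Notation bE := (bE R w1 w2 L U).
Notation bF := (bF R w1 w2 L U).
Lemma ptne1 (a b : pt R) : a.1 < b.1 \/ b.1 < a.1 -> a != b.
Proof. case: a b => [a1 a2] [b1 b2] /= h; apply/eqP => -[e1 e2]; subst; lra. Qed.
Lemma ptne2 (a b : pt R) : a.2 < b.2 \/ b.2 < a.2 -> a != b.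
Proof. case: a b => [a1 a2] [b1 b2] /= h; apply/eqP => -[e1 e2]; subst; lra. Qed.

Lemma uniq4 (a b c d : pt R) : a != b -> a != c -> a != d -> b != c -> b != d -> c != d -> uniq [:: a; b; c; d].
Proof. by rewrite /= !inE !negb_or => -> -> -> -> -> ->. Qed.

Lemma four (a b c d : pt R) : a \in Vc -> b \in Vc -> c \in Vc -> d \in Vc ->
  a != b -> a != c -> a != d -> b != c -> b != d -> c != d -> (4 <= size Vc)%N.
Proof.
move=> ha hb hc hd n1 n2 n3 n4 n5 n6.
have U4 := uniq4 _ _ _ _ n1 n2 n3 n4 n5 n6.
have := uniq_leq_size U4 (s2 := Vc); apply.
by move=> x; rewrite !inE => /or4P [] /eqP ->.
Qed.

Ltac netac := first [apply: ptne1; rewrite /PD.cA /PD.cB /PD.cC /PD.cD /PD.cE /PD.cF /=; lra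
                    | apply: ptne2; rewrite /PD.cA /PD.cB /PD.cC /PD.cD /PD.cE /PD.cF /=; lra].

Lemma nda : good -> g p0 <= f p0 -> w2 <= L.
Proof. move=> [?[?[?[??]]]]; rewrite /PC.p0 /PC.f /PC.g; split_ifs; lra. Qed.
Lemma yda : good -> f p0 < g p0 -> L < w2.
Proof. move=> [?[?[?[??]]]]; rewrite /PC.p0 /PC.f /PC.g; split_ifs; lra. Qed.
Lemma ndc : good -> g p1 <= f p1 -> U <= w1.
Proof. move=> [?[?[?[??]]]]; rewrite /PC.p1 /PC.f /PC.g; split_ifs; lra. Qed.
Lemma ydc : good -> f p1 < g p1 -> w1 < U.
Proof. move=> [?[?[?[??]]]]; rewrite /PC.p1 /PC.f /PC.g; split_ifs; lra. Qed.
Lemma nbE : good -> L <= p0 \/ p1 <= L -> L <= 0 \/ w1 <= L.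
Proof. move=> [?[?[?[??]]]]; rewrite /PC.p0 /PC.p1; split_ifs; lra. Qed.
Lemma nbF : good -> U - w2 <= p0 \/ p1 <= U - w2 -> U <= w2 \/ w1 + w2 <= U.
Proof. move=> [?[?[?[??]]]]; rewrite /PC.p0 /PC.p1; split_ifs; lra. Qed.

Lemma size_ge4 : good -> (L < w1 \/ L < w2 \/ U < w1 + w2) -> (w1 < U \/ w2 < U \/ 0 < L) ->
  (4 <= size Vc)%N.
Proof.
move=> G n1 n2; have h01 := p01 G.
have fg0 := fg p0 G; have fg1 := fg p1 G.
have iA := inV_A R w1 w2 L U; have iB := inV_B R w1 w2 L U;
have iC := inV_C R w1 w2 L U; have iD := inV_D R w1 w2 L U.
have iE := inV_E R w1 w2 L U; have iF := inV_F R w1 w2 L U.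
move: (G) => [g1 [g2 [g3 [g4 g5]]]].
have hEt : bE -> p0 < L /\ L < p1 by rewrite /PD.bE => /andP.
have hFt : bF -> p0 < U - w2 /\ U - w2 < p1 by rewrite /PD.bF => /andP.
have hEf : bE = false -> L <= p0 \/ p1 <= L by rewrite /PD.bE => /negbT /nandP; rewrite -!leNgt.
have hFf : bF = false -> U - w2 <= p0 \/ p1 <= U - w2 by rewrite /PD.bF => /negbT /nandP; rewrite -!leNgt.
have fg0' : f p0 <= g p0 by apply: fg0; apply/andP; lra.
have fg1' : f p1 <= g p1 by apply: fg1; apply/andP; lra.
clear fg0 fg1.
case: (ltrP (f p0) (g p0)) => da; case: (ltrP (f p1) (g p1)) => dc.
- by apply: (four _ _ _ _ iA iB iC iD); netac.
- case hE: bE; first by move: (hEt hE) => [? ?]; apply: (four _ _ _ _ iA iB iC (iE hE)); netac.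
  case hF: bF; first by move: (hFt hF) => [? ?]; apply: (four _ _ _ _ iA iB iC (iF hF)); netac.
  exfalso; move: (hEf hE) (hFf hF) => e f'; have G' := G; move: (nbE G' e) (nbF G' f') => e1 e2; clear -e1 e2 n1 n2 g1 g2 g3 g4 g5 da dc G'.
  have := yda G' da; have := ndc G' dc; lra.
- case hE: bE; first by move: (hEt hE) => [? ?]; apply: (four _ _ _ _ iA iC iD (iE hE)); netac.
  case hF: bF; first by move: (hFt hF) => [? ?]; apply: (four _ _ _ _ iA iC iD (iF hF)); netac.
  exfalso; move: (hEf hE) (hFf hF) => e f'; have G' := G; move: (nbE G' e) (nbF G' f') => e1 e2; clear -e1 e2 n1 n2 g1 g2 g3 g4 g5 da dc G'.
  have := nda G' da; have := ydc G' dc; lra.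
- case hE: bE; case hF: bF.
  + by move: (hEt hE) (hFt hF) => [? ?] [? ?]; apply: (four _ _ _ _ iA iC (iE hE) (iF hF)); netac.
  + exfalso; move: (nbF G (hFf hF)) (nda G da) (ndc G dc) => *; lra.
  + exfalso; move: (nbE G (hEf hE)) (nda G da) (ndc G dc) => *; lra.
  + exfalso; move: (nbE G (hEf hE)) (nda G da) (ndc G dc) => *; lra.
Qed.

End Count.

End PE.
Import PE.

Module PF.

Lemma polyT (R : realType) (w1 w2 L U : R) :
  0 < w1 -> 0 < w2 -> L < U -> L < w1 + w2 -> 0 < U ->
  (L < w1 \/ L < w2 \/ U < w1 + w2) -> (w1 < U \/ w2 < U \/ 0 < L) ->
  exists n, (4 <= n <= 6)%N /\ convex_polygon_with (T R w1 w2 L U) n.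
Proof.
move=> h1 h2 h3 h4 h5 n1 n2.
have G : good R w1 w2 L U by [].
exists (size (Vc R w1 w2 L U)); split.
  rewrite (size_ge4 R w1 w2 L U G n1 n2) /=.
  apply: leq_trans (size_undup _) _.
  by rewrite /cands size_cat size_cat; case: (bE R w1 w2 L U); case: (bF R w1 w2 L U).
exists (Vc R w1 w2 L U); split; first exact: undup_uniq.
split=> //; split=> x.
  split; [exact: T_hull _ _ _ _ _ x G|exact: hull_T _ _ _ _ _ x G].
split.
  move=> ex; have Tx : T R w1 w2 L U x by case: ex.
  apply: (hull_ext R (T R w1 w2 L U) (Vc R w1 w2 L U) x _ ex (T_hull _ _ _ _ _ x G Tx)).
  by move=> y; apply: hull_T _ _ _ _ _ y G.
by rewrite mem_undup => hx; apply: cands_ext _ _ _ _ _ x G hx.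
Qed.

End PF.
Import PF.

Module PG.

Section Aff.
Variable R : realType.

Definition aff (a b c d e f : R) (x : pt R) : pt R :=
  (a * x.1 + b * x.2 + e, c * x.1 + d * x.2 + f).

Lemma aff_comb a b c d e f (y z : pt R) t :
  aff a b c d e f (padd (pscale (1 - t) y) (pscale t z)) =
  padd (pscale (1 - t) (aff a b c d e f y)) (pscale t (aff a b c d e f z)).
Proof. rewrite /aff /padd /pscale /=; congr (_, _); ring. Qed.

Lemma hull_map a b c d e f (V : seq (pt R)) y :
  conv_hull V y -> conv_hull (map (aff a b c d e f) V) (aff a b c d e f y).
Proof.
move=> /conv_hullP [w [w0 [w1 ye]]]; apply/conv_hullP.
set W := map _ V.
have nthW : forall i, (i < size V)%N -> nth (0,0) W i = aff a b c d e f (nth (0,0) V i).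
  move=> i hi; rewrite (set_nth_default (aff a b c d e f (0,0))) ?size_map //.
  by rewrite (nth_map (0,0)).
have en : size W = size V by rewrite size_map.
rewrite /hullw; move: (size W) en nthW => n en nthW; subst n.
exists w; split=> //; split=> //.
have E : forall (F : pt R -> R), \sum_(i < size V) w i * F (nth (0,0) W i) =
   \sum_(i < size V) w i * F (aff a b c d e f (nth (0,0) V i)).
  by move=> F; apply: eq_bigr => i _; rewrite nthW.
rewrite (E fst) (E snd) ye /aff /=.
have S : forall (F : pt R -> R) (k : R), \sum_(i < size V) w i * (k * F (nth (0,0) V i)) = k * \sum_(i < size V) w i * F (nth (0,0) V i).
  by move=> F k; rewrite mulr_sumr; apply: eq_bigr => i _; ring.
have S1 : forall (k : R), \sum_(i < size V) w i * k = k.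
  by move=> k; rewrite -mulr_suml w1 mul1r.
congr (_, _).
  by rewrite -[in LHS](S1 e) -(S fst a) -(S snd b) -!big_split; apply: eq_bigr => i _ /=; ring.
by rewrite -[in LHS](S1 f) -(S fst c) -(S snd d) -!big_split; apply: eq_bigr => i _ /=; ring.
Qed.


Lemma poly_transfer (T : pt R -> Prop) (n : nat) (a b c d e f a' b' c' d' e' f' : R) :
  (forall x, aff a' b' c' d' e' f' (aff a b c d e f x) = x) ->
  (forall y, aff a b c d e f (aff a' b' c' d' e' f' y) = y) ->
  convex_polygon_with T n -> convex_polygon_with (fun x => T (aff a b c d e f x)) n.
Proof.
set phi := aff a b c d e f; set psi := aff a' b' c' d' e' f'.
move=> K1 K2 [V [uV [sV [hV eV]]]].
have inj_psi : injective psi by apply: (can_inj K2).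
have inj_phi : injective phi by apply: (can_inj K1).
have mapV : map phi (map psi V) = V by rewrite -map_comp (eq_map K2) map_id.
exists (map psi V); split; first by rewrite map_inj_uniq.
split; first by rewrite size_map.
split.
  move=> x; split.
    by move=> /hV /(hull_map a' b' c' d' e' f'); rewrite -/psi K1.
  move=> /(hull_map a b c d e f); rewrite -/phi mapV => /hV //.
move=> x; split.
  move=> [Tx Ex]; rewrite -(mem_map inj_phi) mapV; apply/eV; split=> // y z t Ty Tz t01 xe.
  have Ty' : T (phi (psi y)) by rewrite K2.
  have Tz' : T (phi (psi z)) by rewrite K2.
  have hx : x = padd (pscale (1 - t) (psi y)) (pscale t (psi z)).
    by rewrite -[x]K1 xe /psi aff_comb.
  have [e1 e2] := Ex (psi y) (psi z) t Ty' Tz' t01 hx.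
  by split; [rewrite -e1 K2|rewrite -e2 K2].
rewrite -(mem_map inj_phi) mapV => /eV [Tx Ex]; split=> // y z t Ty Tz t01 xe.
have hx : phi x = padd (pscale (1 - t) (phi y)) (pscale t (phi z)).
  by rewrite xe /phi aff_comb.
have [e1 e2] := Ex (phi y) (phi z) t Ty Tz t01 hx.
by split; apply: inj_phi.
Qed.

End Aff.
Arguments aff {R}.

End PG.
Import PG.

Module PH.

Section Geo.
Variable R : realType.
Implicit Types (u x ca cb : pt R).

Lemma dot_ge0 u : 0 <= dot u u.
Proof. rewrite /dot; nra. Qed.

Lemma pn_sq u : pnorm u * pnorm u = dot u u.
Proof. by rewrite -expr2 sqr_sqrtr // dot_ge0. Qed.

Lemma pn_ge0 u : 0 <= pnorm u.
Proof. exact: sqrtr_ge0. Qed.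

Lemma pn_sym ca cb : pnorm (psub ca cb) = pnorm (psub cb ca).
Proof. by rewrite /pnorm /dot /psub /=; congr (Num.sqrt _); ring. Qed.

Lemma pn_scale (t : R) u : pnorm (pscale t u) = `|t| * pnorm u.
Proof.
rewrite /pnorm /dot /pscale /=.
have -> : t * u.1 * (t * u.1) + t * u.2 * (t * u.2) = t ^+ 2 * (u.1 * u.1 + u.2 * u.2) by ring.
by rewrite sqrtrM ?sqrtr_sqr // sqr_ge0.
Qed.

Lemma prodle0 (s A B : R) : A <= B -> (s - A) * (s - B) <= 0 <-> A <= s /\ s <= B.
Proof.
move=> AB; split.
  move=> h; split.
    by case: (lerP A s) => // hs; nra.
  by case: (lerP s B) => // hs; nra.
by move=> [h1 h2]; nra.
Qed.

Lemma slab_iff ca ra cb rb x :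
  0 < pnorm (psub cb ca) -> ra + rb <= pnorm (psub cb ca) ->
  slab ca ra cb rb x <->
  ra * pnorm (psub cb ca) <= dot (psub x ca) (psub cb ca) /\
  dot (psub x ca) (psub cb ca) <= pnorm (psub cb ca) * pnorm (psub cb ca) - rb * pnorm (psub cb ca).
Proof.
set d := pnorm (psub cb ca) => d0 hr.
have dd := pn_sq (psub cb ca); rewrite -/d in dd.
rewrite /slab /boundary_pt; cbv beta zeta; rewrite (pn_sym ca cb) -/d.
have E1 : dot (psub x (padd ca (pscale (ra / d) (psub cb ca)))) (psub cb ca)
   = dot (psub x ca) (psub cb ca) - ra / d * dot (psub cb ca) (psub cb ca).
  by rewrite /dot /psub /padd /pscale /=; ring.
have E2 : dot (psub x (padd cb (pscale (rb / d) (psub ca cb)))) (psub cb ca)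
   = dot (psub x ca) (psub cb ca) - dot (psub cb ca) (psub cb ca) + rb / d * dot (psub cb ca) (psub cb ca).
  by rewrite /dot /psub /padd /pscale /=; ring.
rewrite E1 E2 -dd.
have dn : d != 0 by apply: lt0r_neq0.
have -> : ra / d * (d * d) = ra * d by field.
have -> : rb / d * (d * d) = rb * d by field.
set s := dot (psub x ca) (psub cb ca).
have -> : s - d * d + rb * d = s - (d * d - rb * d) by ring.
apply: prodle0; nra.
Qed.


Lemma disj_lt ca ra cb rb : (forall x, ~ (disc ca ra x /\ disc cb rb x)) -> 0 < ra -> 0 < rb ->
  0 < pnorm (psub cb ca) -> ra + rb < pnorm (psub cb ca).
Proof.
set d := pnorm (psub cb ca) => H ra0 rb0 d0.
case: (ltrP (ra + rb) d) => // hd; exfalso.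
case: (lerP d ra) => hra.
  apply: (H cb); split; first by rewrite /disc -/d.
  rewrite /disc /pnorm /dot /psub /= !subrr !mul0r addr0 sqrtr0; lra.
pose x := padd ca (pscale (ra / d) (psub cb ca)).
have dn : d != 0 by apply: lt0r_neq0.
apply: (H x); split; rewrite /disc.
  have -> : psub x ca = pscale (ra / d) (psub cb ca) by rewrite /x /psub /padd /pscale /=; congr (_, _); ring.
  rewrite pn_scale -/d ger0_norm; last by apply: divr_ge0; lra.
  by rewrite divfK //.
have -> : psub x cb = pscale (ra / d - 1) (psub cb ca) by rewrite /x /psub /padd /pscale /=; congr (_, _); ring.
rewrite pn_scale -/d ler0_norm; last first.
  by rewrite subr_le0 ler_pdivrMr // mul1r; lra.
have -> : - (ra / d - 1) * d = d - ra by field.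
lra.
Qed.

End Geo.

End PH.
Import PH.

Module PI.

Lemma core (R : realType) (d1 d2 d3 e x y z : R) : 0<d1 -> 0<d2 -> 0<d3 -> d3*d3 = d1*d1+d2*d2+2*e -> e*e <= d1*d1*(d2*d2) ->
 0<x -> 0<y -> 0<z -> x+y<d1 -> y+z<d2 -> x+z<d3 ->
 x*d3 + y*(d1-d2) >= d1*d1+e ->
 x*(d3-d1) + z*d2 >= d2*d2+e ->
 y*d1 + z*(d2-d3) + e >= 0 -> False.
Proof. move=> *.
have T1: d3 <= d1+d2 by nra.
have T2: d1 <= d2+d3 by nra.
have T3: d2 <= d1+d3 by nra.
set sx := (d1+d3-d2)/2 - x. set sy := (d1+d2-d3)/2 - y. set sz := (d2+d3-d1)/2 - z.
have Ha: sx*d3 + sy*(d1-d2) <= 0 by rewrite /sx /sy; nra.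
have Hb: sz*d2 + sx*(d3-d1) <= 0 by rewrite /sx /sz; nra.
have Hc: sy*d1 + sz*(d2-d3) <= 0 by rewrite /sy /sz; nra.
have P1: sx+sy>0 by rewrite /sx /sy; lra.
have P2: sy+sz>0 by rewrite /sz /sy; lra.
have P3: sx+sz>0 by rewrite /sx /sz; lra.
clearbody sx sy sz.
case: (lerP sy 0) => ?; first nra.
case: (lerP sz 0) => ?; first nra.
case: (lerP sx 0) => ?.
  have : 0 < (sz+sx)*d2 by nra. have : 0 <= (-sx)*(d1+d2-d3) by nra. nra.
case: (lerP d2 d1) => ?. have: sy*(d2-d1) <= 0 by nra. nra.
case: (lerP d1 d3) => ?. have: sx*(d1-d3) <= 0 by nra. nra.
case: (lerP d3 d2) => ?. have: sz*(d3-d2) <= 0 by nra. nra.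
lra.
Qed.

Lemma Nlem (R : realType) (d1 d2 d3 x y z : R) : 0<d1 -> 0<d2 -> 0<d3 ->
 d3 <= d1+d2 -> d1 <= d2+d3 -> d2 <= d1+d3 ->
 x+y<d1 -> y+z<d2 -> x+z<d3 ->
 x*d3 + y*d1 + z*d2 < (d1*d1+d2*d2+d3*d3)/2.
Proof. move=> *.
set sx := (d1+d3-d2)/2 - x. set sy := (d1+d2-d3)/2 - y. set sz := (d2+d3-d1)/2 - z.
have -> : x*d3 + y*d1 + z*d2 = (d1*d1+d2*d2+d3*d3)/2 - (sx*d3 + sy*d1 + sz*d2) by rewrite /sx /sy /sz; field.
have P1: sx+sy>0 by rewrite /sx /sy; lra.
have P2: sy+sz>0 by rewrite /sz /sy; lra.
have P3: sx+sz>0 by rewrite /sx /sz; lra.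
suff : 0 < sx*d3 + sy*d1 + sz*d2 by lra.
clearbody sx sy sz.
case: (lerP sx 0) => ?.
  have : 0 < (sy+sx)*d1 by nra. have : 0 < (sz+sx)*d2 by nra. have : 0 <= (-sx)*(d1+d2-d3) by nra. nra.
case: (lerP sy 0) => ?.
  have : 0 < (sx+sy)*d3 by nra. have : 0 < (sz+sy)*d2 by nra. have : 0 <= (-sy)*(d3+d2-d1) by nra. nra.
case: (lerP sz 0) => ?.
  have : 0 < (sx+sz)*d3 by nra. have : 0 < (sy+sz)*d1 by nra. have : 0 <= (-sz)*(d3+d1-d2) by nra. nra.
nra.
Qed.

Lemma aff_inv (R : realType) (p q r s e f : R) : p * s - q * r != 0 ->
  let D := p * s - q * r in
  (forall x, aff (s / D) (- q / D) (- r / D) (p / D) (- (s * e - q * f) / D) (- (- r * e + p * f) / D) (aff p q r s e f x) = x) /\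
  (forall y, aff p q r s e f (aff (s / D) (- q / D) (- r / D) (p / D) (- (s * e - q * f) / D) (- (- r * e + p * f) / D) y) = y).
Proof.
move=> hD D; split=> x; rewrite /aff /=; rewrite [x in RHS]surjective_pairing; congr (_, _); rewrite /D; field; done.
Qed.

End PI.
Import PI.


Lemma poly_ext (R : realType) (S S' : pt R -> Prop) n : (forall x, S x <-> S' x) ->
  convex_polygon_with S n -> convex_polygon_with S' n.
Proof.
move=> HS [V [uV [sV [hV eV]]]]; exists V; split=> //; split=> //; split.
  by move=> x; rewrite -HS.
move=> x; rewrite -eV; split.
  move=> [Sx Ex]; split; first by apply/HS.
  by move=> y z t Sy Sz; apply: Ex; apply/HS.
move=> [Sx Ex]; split; first by apply/HS.
by move=> y z t Sy Sz; apply: Ex; apply/HS.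
Qed.

Theorem theorem2 (R : realType) (ci cj ck : pt R) (ri rj rk : R) :
  0 < ri -> 0 < rj -> 0 < rk ->
  (forall x, ~ (disc ci ri x /\ disc cj rj x)) ->
  (forall x, ~ (disc cj rj x /\ disc ck rk x)) ->
  (forall x, ~ (disc ci ri x /\ disc ck rk x)) ->
  cross (psub cj ci) (psub ck ci) != 0 ->
  exists n : nat, (4 <= n <= 6)%N /\
    convex_polygon_with
      (fun x => slab ci ri cj rj x /\ slab cj rj ck rk x /\ slab ci ri ck rk x) n.
Proof.
move=> hri hrj hrk Dij Djk Dik hcr.
have [k ek] : exists k, cross (psub cj ci) (psub ck cj) = k by eexists.
have [e ee] : exists e, dot (psub cj ci) (psub ck cj) = e by eexists.
have [d1 ed1] : exists d, pnorm (psub cj ci) = d by eexists.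
have [d2 ed2] : exists d, pnorm (psub ck cj) = d by eexists.
have [d3 ed3] : exists d, pnorm (psub ck ci) = d by eexists.
have [m1 em1] : exists d, dot (psub cj ci) (psub cj ci) = d by eexists.
have [m2 em2] : exists d, dot (psub ck cj) (psub ck cj) = d by eexists.
have [m3 em3] : exists d, dot (psub ck ci) (psub ck ci) = d by eexists.
have [m32 em32] : exists d, dot (psub ck ci) (psub ck cj) = d by eexists.
have hk : k != 0.
  by move: hcr; rewrite -ek /cross /psub /=; congr (_ != _); ring.
have k2 : 0 < k * k by case/orP: (lt_total hk) => ?; nra.
have q1 : d1 * d1 = m1 by rewrite -ed1 -em1 pn_sq.
have q2 : d2 * d2 = m2 by rewrite -ed2 -em2 pn_sq.
have q3 : d3 * d3 = m3 by rewrite -ed3 -em3 pn_sq.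
have lag12 : m1 * m2 = e * e + k * k by rewrite -em1 -em2 -ee -ek /dot /cross; ring.
have lag32 : m3 * m2 = m32 * m32 + k * k
  by rewrite -em3 -em2 -em32 -ek /dot /cross /psub /=; ring.
have n3e : m3 = m1 + m2 + 2 * e
  by rewrite -em3 -em2 -em1 -ee /dot /psub /=; ring.
have g1 : 0 <= m1 by rewrite -em1; apply: dot_ge0.
have g2 : 0 <= m2 by rewrite -em2; apply: dot_ge0.
have g3 : 0 <= m3 by rewrite -em3; apply: dot_ge0.
have p1 : 0 <= d1 by rewrite -ed1; apply: pn_ge0.
have p2 : 0 <= d2 by rewrite -ed2; apply: pn_ge0.
have p3 : 0 <= d3 by rewrite -ed3; apply: pn_ge0.
have n1p : 0 < m1 by nra.
have n2p : 0 < m2 by nra.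
have n3p : 0 < m3 by nra.
have d1p : 0 < d1 by nra.
have d2p : 0 < d2 by nra.
have d3p : 0 < d3 by nra.
have dd3 : d3 * d3 = d1 * d1 + d2 * d2 + 2 * e by lra.
have cs : e * e <= d1 * d1 * (d2 * d2) by rewrite q1 q2; lra.
have dp : 0 <= d1 * d2 by nra.
have he1 : e <= d1 * d2.
  case: (lerP e (d1 * d2)) => // h; have : (d1 * d2) * (d1 * d2) < e * e by clear -h dp; nra.
  lra.
have he2 : - (d1 * d2) <= e.
  case: (lerP (- (d1 * d2)) e) => // h; have : (d1 * d2) * (d1 * d2) < e * e by clear -h dp; nra.
  lra.
have T1 : d3 <= d1 + d2.
  case: (lerP d3 (d1 + d2)) => // h; have : (d1 + d2) * (d1 + d2) < d3 * d3 by clear -h d1p d2p; nra.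
  lra.
have T2 : d1 <= d2 + d3.
  case: (lerP d1 (d2 + d3)) => // h; have : d3 * d3 < (d1 - d2) * (d1 - d2) by clear -h d3p d2p; nra.
  lra.
have T3 : d2 <= d1 + d3.
  case: (lerP d2 (d1 + d3)) => // h; have : d3 * d3 < (d2 - d1) * (d2 - d1) by clear -h d3p d1p; nra.
  lra.
have r12 : ri + rj < d1 by rewrite -ed1; apply: disj_lt; rewrite ?ed1.
have r23 : rj + rk < d2 by rewrite -ed2; apply: disj_lt; rewrite ?ed2.
have r13 : ri + rk < d3 by rewrite -ed3; apply: disj_lt; rewrite ?ed3.
set a1 := ri * d1; set a2 := e + rj * d2.
set w1 := d1 * d1 - rj * d1 - ri * d1.
set w2 := d2 * d2 - rk * d2 - rj * d2.
set L := ri * d3 - a1 - a2.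
set U := d3 * d3 - rk * d3 - a1 - a2.
have hw1 : 0 < w1 by rewrite /w1; nra.
have hw2 : 0 < w2 by rewrite /w2; nra.
have hLU : L < U by rewrite /L /U; nra.
have hN1 := Nlem R d1 d2 d3 ri rj rk d1p d2p d3p T1 T2 T3 r12 r23 r13.
have hN2 := Nlem R d1 d3 d2 rj ri rk d1p d3p d2p T3 ltac:(lra) ltac:(lra) ltac:(lra) ltac:(lra) ltac:(lra).
have hL : L < w1 + w2 by rewrite /L /w1 /w2 /a1 /a2; lra.
have hU : 0 < U by rewrite /U /a1 /a2; lra.
have nt1 : L < w1 \/ L < w2 \/ U < w1 + w2.
  case: (ltrP L w1) => h1; first by left.
  case: (ltrP L w2) => h2; first by right; left.
  case: (ltrP U (w1 + w2)) => h3; first by right; right.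
  rewrite /L /U /w1 /w2 /a1 /a2 in h1 h2 h3.
  exfalso; apply: (core R d1 d2 d3 e ri rj rk) => //; lra.
have nt2 : w1 < U \/ w2 < U \/ 0 < L.
  case: (ltrP w1 U) => h1; first by left.
  case: (ltrP w2 U) => h2; first by right; left.
  case: (ltrP 0 L) => h3; first by right; right.
  rewrite /L /U /w1 /w2 /a1 /a2 in h1 h2 h3.
  exfalso; apply: (core R d2 d1 d3 e rk rj ri) => //; lra.
have [n [hn P]] := polyT R w1 w2 L U hw1 hw2 hLU hL hU nt1 nt2.
exists n; split=> //.
set p := (psub cj ci).1; set q := (psub cj ci).2; set r := (psub ck cj).1; set s := (psub ck cj).2.
set E := - (ci.1 * p + ci.2 * q) - a1; set F := - (ci.1 * r + ci.2 * s) - a2.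
have hdet : p * s - q * r != 0 by move: hk; rewrite -ek /cross.
have [K1 K2] := aff_inv R p q r s E F hdet.
have P' := poly_transfer R (T R w1 w2 L U) n p q r s E F _ _ _ _ _ _ K1 K2 P.
apply: (poly_ext R _ _ n _ P') => x /=.
have X1 : dot (psub x ci) (psub cj ci) = (aff p q r s E F x).1 + a1
  by rewrite /aff /dot /psub /E /p /q /=; ring.
have X2 : dot (psub x cj) (psub ck cj) = (aff p q r s E F x).2 + rj * d2
  by rewrite /aff /dot /psub /F /r /s /a2 -ee /dot /psub /=; ring.
have X3 : dot (psub x ci) (psub ck ci) = (aff p q r s E F x).1 + (aff p q r s E F x).2 + a1 + a2
  by rewrite /aff /dot /psub /E /F /p /q /r /s /=; ring.
have S1 := slab_iff R ci ri cj rj x ltac:(rewrite ed1; lra) ltac:(rewrite ed1; lra).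
have S2 := slab_iff R cj rj ck rk x ltac:(rewrite ed2; lra) ltac:(rewrite ed2; lra).
have S3 := slab_iff R ci ri ck rk x ltac:(rewrite ed3; lra) ltac:(rewrite ed3; lra).
rewrite ed1 X1 in S1; rewrite ed2 X2 in S2; rewrite ed3 X3 in S3.
move: S1 S2 S3; set y := aff p q r s E F x => S1 S2 S3.
rewrite /T /w1 /w2 /L /U /a1 /a2 in S1 S2 S3 *.
clear -S1 S2 S3.
split.
  move=> H; split; [apply/S1|split; [apply/S2|apply/S3]]; lra.
move=> [/S1 ? [/S2 ? /S3 ?]]; lra.
Qed.
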